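(* Let $m\ge1$ be an integer, $0<h\le1$, and $E=(\alpha+i\mu)h^{2m/(m+1)}$ with $\alpha,\mu>0$ independent of $h$. Let \[ \varphi(x)=\int_0^x(E+m^{-1}y^{2m})^{1/2}\,dy, \] where the branch of the square root is chosen to have positive imaginary part, and let \[ f=-h^2\Big(\tfrac34(\varphi')^{-2}(\varphi'')^2-\tfrac12(\varphi')^{-1}\varphi'''\Big). \] Then: (i) There exists $C>0$ independent of $h$ such that \[ |\operatorname{Im}\varphi|\le C\begin{cases}h(1+\log(x/h^{1/2})),& m=1,\\ h,& m\ge2.\end{cases} \] In particular, if $|x|\le Ch^{1/(m+1)}$, then $|\operatorname{Im}\varphi|\le C'$ for some $C'>0$ independent of $h$. (ii) There exists $C>0$ independent of $h$ such that \[ C^{-1}\sqrt{h^{2m/(m+1)}+x^{2m}}\le|\varphi'(x)|\le C\sqrt{h^{2m/(m+1)}+x^{2m}}. \] (iii) $\varphi'=(E+m^{-1}x^{2m})^{1/2}$, $\varphi''=x^{2m-1}(\varphi')^{-1}$, $\varphi'''=\big((1-m^{-1})x^{4m-2}+E(2m-1)x^{2m-2}\big)(\varphi')^{-3}$, and in particular \[ f=-h^2x^{2m-2}\Big(\big(\tfrac14+\tfrac1{2m}\big)x^{2m}-\big(m-\tfrac12\big)E\Big)(\varphi')^{-4}. \] *)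

(* Defs.v *)
From Stdlib Require Import Reals.
From Coquelicot Require Import Coquelicot.
Open Scope R_scope.

Definition hpow (m : nat) (h : R) : R := Rpower h (2 * INR m / (INR m + 1)).

Definition Eh (alpha mu : R) (m : nat) (h : R) : C :=
  Cmult (alpha, mu) (RtoC (hpow m h)).

(* Square root of w with nonnegative imaginary part, written out explicitly:
   (sqrt((|w| + Re w)/2), sqrt((|w| - Re w)/2)).  For Im w > 0 (the only case
   used: Im (E + y^{2m}/m) = mu h^{2m/(m+1)} > 0) this is the unique z with
   z^2 = w and Im z > 0, i.e. the branch "with positive imaginary part". *)
Definition sqrt_pim (w : C) : C :=
  (sqrt ((Cmod w + Re w) / 2), sqrt ((Cmod w - Re w) / 2)).

Definition dphi (m : nat) (E : C) (x : R) : C :=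
  sqrt_pim (Cplus E (RtoC (x ^ (2 * m) / INR m))).

Definition phi (m : nat) (E : C) (x : R) : C :=
  @RInt C_R_CompleteNormedModule (dphi m E) 0 x.

Definition d2phi (m : nat) (E : C) (x : R) : C :=
  Cdiv (RtoC (x ^ (2 * m - 1))) (dphi m E x).

Definition d3phi (m : nat) (E : C) (x : R) : C :=
  Cdiv (Cplus (RtoC ((1 - / INR m) * x ^ (4 * m - 2)))
              (Cmult E (RtoC (INR (2 * m - 1) * x ^ (2 * m - 2)))))
       (Cmult (dphi m E x) (Cmult (dphi m E x) (dphi m E x))).

Definition fpot (h : R) (m : nat) (E : C) (x : R) : C :=
  Cmult (RtoC (- h ^ 2))
    (Cminus (Cmult (RtoC (3 / 4))
               (Cmult (Cinv (Cmult (dphi m E x) (dphi m E x)))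
                      (Cmult (d2phi m E x) (d2phi m E x))))
            (Cmult (RtoC (1 / 2))
               (Cmult (Cinv (dphi m E x)) (d3phi m E x)))).

(* Main.v *)
Require Import Defs.
From Stdlib Require Import Reals Lra Lia.
From Coquelicot Require Import Coquelicot.
Open Scope R_scope.


Lemma pim_facts (a b : R) : 0 < b ->
  let r := Cmod (a, b) in
  let u := fst (sqrt_pim (a, b)) in
  let v := snd (sqrt_pim (a, b)) in
  0 < r /\ r * r = a * a + b * b /\ a < r /\ - a < r /\
  0 < u /\ 0 < v /\ u * u = (r + a) / 2 /\ v * v = (r - a) / 2 /\ 2 * u * v = b.
Proof.
intros Hb r u v.
assert (Hr2 : r * r = a * a + b * b).
{ unfold r, Cmod; simpl. rewrite sqrt_sqrt; nra. }
assert (Hr0 : 0 <= r) by (unfold r, Cmod; apply sqrt_pos).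
assert (Hr : 0 < r) by nra.
assert (Har : a < r) by nra.
assert (Har' : - a < r) by nra.
assert (Hu2 : u * u = (r + a) / 2) by (unfold u; simpl; fold r; rewrite sqrt_sqrt; lra).
assert (Hv2 : v * v = (r - a) / 2) by (unfold v; simpl; fold r; rewrite sqrt_sqrt; lra).
assert (Hu : 0 < u) by (unfold u; simpl; fold r; apply sqrt_lt_R0; lra).
assert (Hv : 0 < v) by (unfold v; simpl; fold r; apply sqrt_lt_R0; lra).
repeat split; auto.
assert (H : (2*u*v) * (2*u*v) = b * b).
{ replace ((2*u*v) * (2*u*v)) with (4 * (u*u) * (v*v)) by ring.
  rewrite Hu2, Hv2. nra. }
assert (H2 : (2*u*v - b)*(2*u*v + b) = 0) by nra.
apply Rmult_integral in H2. destruct H2; nra.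
Qed.

Lemma is_derive_C (u v : R -> R) x du dv :
  is_derive u x du -> is_derive v x dv ->
  @is_derive R_AbsRing C_R_NormedModule (fun t => (u t, v t) : C) x (du, dv).
Proof.
intros Hu Hv.
unfold is_derive in *.
apply (filterdiff_comp'_2 u v (fun a b => (a,b) : C) x _ _ (fun a b => (a,b))) ; auto.
apply (filterdiff_linear (fun t : prod_NormedModule _ R_NormedModule R_NormedModule => (fst t, snd t) : C)).
apply is_linear_prod; [apply is_linear_fst | apply is_linear_snd].
Qed.

Lemma is_derive_Im (f : R -> C) x df :
  @is_derive R_AbsRing C_R_NormedModule f x df ->
  is_derive (fun t => Im (f t)) x (Im df).
Proof.
intros H. unfold is_derive in *.
apply (filterdiff_comp' f (fun z : C_R_NormedModule => snd z) x _ (fun z : C_R_NormedModule => snd z) H).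
apply filterdiff_linear. apply (@is_linear_snd R_AbsRing R_NormedModule R_NormedModule).
Qed.

Lemma is_derive_eqR {K : AbsRing} {V : NormedModule K} (f : K -> V) x l l' :
  is_derive f x l -> l = l' -> is_derive f x l'.
Proof. intros H <-; exact H. Qed.

Lemma sqrt_pim_derive (a : R -> R) b x da : 0 < b -> is_derive a x da ->
  @is_derive R_AbsRing C_R_NormedModule (fun t => sqrt_pim (a t, b)) x
    (Cmult (RtoC (da / 2)) (Cinv (sqrt_pim (a x, b)))).
Proof.
intros Hb Ha.
destruct (pim_facts (a x) b Hb) as (Hr & Hr2 & Har & Har' & Hu & Hv & Hu2 & Hv2 & Huv).
set (r := Cmod (a x, b)) in *.
set (u := fst (sqrt_pim (a x, b))) in *.
set (v := snd (sqrt_pim (a x, b))) in *.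
assert (Dr : is_derive (fun t => Cmod (a t, b)) x (a x * da / r)).
{ unfold Cmod; simpl.
  eapply is_derive_eqR.
  - apply is_derive_sqrt.
    + apply (is_derive_plus (fun t => a t * (a t * 1)) (fun _ => b * (b * 1))).
      * apply (Derive.is_derive_mult (fun t => a t) (fun t => a t * 1)); [exact Ha|].
        apply (Derive.is_derive_mult (fun t => a t) (fun t => 1)); [exact Ha| apply is_derive_const].
      * apply is_derive_const.
    + nra.
  - unfold r, Cmod. simpl. fold r. simpl. unfold plus, zero. simpl. 
    field. unfold r, Cmod. simpl. apply Rgt_not_eq. apply sqrt_lt_R0. nra. }
assert (Dp : forall sg : R, is_derive (fun t => (Cmod (a t, b) + sg * a t) / 2) x
          ((a x * da / r + sg * da) / 2)).
{ intro sg. eapply is_derive_eqR.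
  - apply (is_derive_div (fun t => Cmod (a t, b) + sg * a t) (fun _ => 2)).
    + apply (is_derive_plus (fun t => Cmod (a t, b)) (fun t => sg * a t)); [exact Dr|].
      apply is_derive_scal. exact Ha.
    + apply is_derive_const.
    + lra.
  - unfold plus, zero; simpl. match goal with |- ?A = ?B => change (@eq R A B) end. field. lra. }
assert (Du : is_derive (fun t => sqrt ((Cmod (a t, b) + 1 * a t) / 2)) x
          ((a x * da / r + 1 * da) / 2 / (2 * u))).
{ eapply is_derive_eqR. apply is_derive_sqrt. apply Dp. simpl. fold r. lra.
  unfold u; simpl; fold r. rewrite !Rmult_1_l. reflexivity. }
assert (Dv : is_derive (fun t => sqrt ((Cmod (a t, b) + (-1) * a t) / 2)) x
          ((a x * da / r + (-1) * da) / 2 / (2 * v))).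
{ eapply is_derive_eqR. apply is_derive_sqrt. apply Dp. simpl. fold r. lra.
  unfold v; simpl; fold r. replace (r + -1 * a x) with (r - a x) by ring. reflexivity. }
eapply is_derive_ext.
{ intro t. unfold sqrt_pim. simpl.
  replace (Cmod (a t, b) + a t) with (Cmod (a t, b) + 1 * a t) by ring.
  replace (Cmod (a t, b) - a t) with (Cmod (a t, b) + (-1) * a t) by ring.
  reflexivity. }
eapply is_derive_eqR.
{ apply is_derive_C; [exact Du | exact Dv]. }
change (sqrt_pim (a x, b)) with ((u, v) : C).
unfold Cinv, Cmult, RtoC; simpl.
assert (Ea : a x = u*u - v*v) by lra.
assert (Er : r = u*u + v*v) by lra.
rewrite Ea, Er.
f_equal; field; nra.
Qed.

Lemma is_derive_Re (f : R -> C) x df :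
  @is_derive R_AbsRing C_R_NormedModule f x df ->
  is_derive (fun t => Re (f t)) x (Re df).
Proof.
intros H. unfold is_derive in *.
apply (filterdiff_comp' f (fun z : C_R_NormedModule => fst z) x _ (fun z : C_R_NormedModule => fst z) H).
apply filterdiff_linear. apply (@is_linear_fst R_AbsRing R_NormedModule R_NormedModule).
Qed.

Ltac clean_ops := unfold plus, minus, opp, zero, scal, mult; simpl;
  match goal with |- ?A = ?B => change (@eq R A B) end.

Lemma is_derive_Cmult (f g : R -> C) x df dg :
  @is_derive R_AbsRing C_R_NormedModule f x df ->
  @is_derive R_AbsRing C_R_NormedModule g x dg ->
  @is_derive R_AbsRing C_R_NormedModule (fun t => Cmult (f t) (g t)) x
     (Cplus (Cmult df (g x)) (Cmult (f x) dg)).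
Proof.
intros Hf Hg.
pose proof (is_derive_Re f x df Hf) as Hf1.
pose proof (is_derive_Im f x df Hf) as Hf2.
pose proof (is_derive_Re g x dg Hg) as Hg1.
pose proof (is_derive_Im g x dg Hg) as Hg2.
unfold Cmult.
eapply is_derive_eqR.
{ apply is_derive_C.
  - apply (is_derive_minus (fun t => fst (f t) * fst (g t)) (fun t => snd (f t) * snd (g t))).
    + apply (Derive.is_derive_mult (fun t => fst (f t)) (fun t => fst (g t))); first [exact Hf1 | exact Hf2 | exact Hg1 | exact Hg2].
    + apply (Derive.is_derive_mult (fun t => snd (f t)) (fun t => snd (g t))); first [exact Hf1 | exact Hf2 | exact Hg1 | exact Hg2].
  - apply (is_derive_plus (fun t => fst (f t) * snd (g t)) (fun t => snd (f t) * fst (g t))).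
    + apply (Derive.is_derive_mult (fun t => fst (f t)) (fun t => snd (g t))); first [exact Hf1 | exact Hf2 | exact Hg1 | exact Hg2].
    + apply (Derive.is_derive_mult (fun t => snd (f t)) (fun t => fst (g t))); first [exact Hf1 | exact Hf2 | exact Hg1 | exact Hg2]. }
unfold Cplus, Re, Im; simpl. unfold minus, plus, opp; simpl. f_equal; ring.
Qed.

Lemma is_derive_Cinv (f : R -> C) x df :
  @is_derive R_AbsRing C_R_NormedModule f x df -> f x <> RtoC 0 ->
  @is_derive R_AbsRing C_R_NormedModule (fun t => Cinv (f t)) x
     (Copp (Cmult df (Cinv (Cmult (f x) (f x))))).
Proof.
intros Hf Hnz.
pose proof (is_derive_Re f x df Hf) as Hf1.
pose proof (is_derive_Im f x df Hf) as Hf2.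
assert (Hn : fst (f x) ^ 2 + snd (f x) ^ 2 <> 0).
{ intro H. apply Hnz. destruct (f x) as [p q]. simpl in H.
  assert (p = 0) by nra. assert (q = 0) by nra. subst. reflexivity. }
assert (Dn : is_derive (fun t => fst (f t) ^ 2 + snd (f t) ^ 2) x
   (INR 2 * Re df * fst (f x) ^ 1 + INR 2 * Im df * snd (f x) ^ 1)).
{ apply (is_derive_plus (fun t => fst (f t) ^ 2) (fun t => snd (f t) ^ 2)).
  - apply (is_derive_pow (fun t => fst (f t)) 2). exact Hf1.
  - apply (is_derive_pow (fun t => snd (f t)) 2). exact Hf2. }
unfold Cinv at 1.
eapply is_derive_eqR.
{ apply is_derive_C.
  - apply (is_derive_div (fun t => fst (f t))); [exact Hf1 | exact Dn | exact Hn].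
  - apply (is_derive_div (fun t => - snd (f t))); [ | exact Dn | exact Hn].
    apply (is_derive_opp (fun t => snd (f t))). exact Hf2. }
revert Hn. unfold Re, Im. destruct (f x) as [p q]. destruct df as [dp dq].
unfold Cinv, Cmult, Copp; simpl. unfold opp; simpl. intro Hn.
f_equal; field; split; auto; nra.
Qed.

Lemma dphi_eq (m : nat) (E : C) t :
  dphi m E t = sqrt_pim (fst E + / INR m * t ^ (2 * m), snd E).
Proof.
unfold dphi, Cplus, RtoC; simpl. rewrite Rplus_0_r. f_equal. f_equal. unfold Rdiv. ring.
Qed.

Lemma deriv_all (m : nat) (E : C) x : (1 <= m)%nat -> 0 < Im E ->
  @is_derive R_AbsRing C_R_NormedModule (dphi m E) x (d2phi m E x) /\
  @is_derive R_AbsRing C_R_NormedModule (d2phi m E) x (d3phi m E x) /\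
  dphi m E x <> RtoC 0 /\
  Cmult (dphi m E x) (dphi m E x) = Cplus E (RtoC (x ^ (2 * m) / INR m)).
Proof.
intros Hm HE.
assert (HmR : 1 <= INR m) by (apply (le_INR 1); exact Hm).
assert (Da : forall t, is_derive (fun t => fst E + / INR m * t ^ (2 * m)) t
                 (2 * t ^ (2 * m - 1))).
{ intro t. eapply is_derive_eqR.
  - apply (is_derive_plus (fun _ => fst E) (fun t => / INR m * t ^ (2 * m))).
    + apply is_derive_const.
    + apply is_derive_scal. apply (is_derive_pow (fun t => t)). apply is_derive_id.
  - unfold plus, zero; simpl. replace (Nat.pred (m + (m + 0))) with (m + (m + 0) - 1)%nat by lia. replace (INR (m + (m+0))) with (2 * INR m) by (rewrite !plus_INR; simpl; ring). unfold one; simpl. field. lra. }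

assert (D1 : forall t, @is_derive R_AbsRing C_R_NormedModule (dphi m E) t (d2phi m E t)).
{ intro t. eapply is_derive_ext. { intro s. symmetry. apply dphi_eq. }
  eapply is_derive_eqR. { apply sqrt_pim_derive. exact HE. apply Da. }
  unfold d2phi, Cdiv. rewrite <- dphi_eq. f_equal. f_equal. field. }
assert (Hz : forall t, dphi m E t <> RtoC 0 /\
   Cmult (dphi m E t) (dphi m E t) = Cplus E (RtoC (t ^ (2 * m) / INR m))).
{ intro t. rewrite dphi_eq.
  destruct (pim_facts (fst E + / INR m * t ^ (2 * m)) (snd E) HE)
    as (Hr & Hr2 & Har & Har' & Hu & Hv & Hu2 & Hv2 & Huv).
  revert Hu Hv Hu2 Hv2 Huv. destruct (sqrt_pim _) as [u v]. simpl. intros.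
  split.
  - intro H. injection H. lra.
  - unfold Cmult, Cplus, RtoC; simpl. destruct E as [e1 e2]; simpl in *.
    f_equal; [| lra]. unfold Rdiv. nra. }
split; [apply D1|]. split; [| apply Hz].
unfold d2phi at 1, Cdiv.
eapply is_derive_eqR.
{ apply is_derive_Cmult.
  - apply (is_derive_C (fun t => t ^ (2 * m - 1)) (fun _ => 0)).
    + apply (is_derive_pow (fun t => t)). apply is_derive_id.
    + apply is_derive_const.
  - apply is_derive_Cinv. apply D1. apply Hz. }
destruct (Hz x) as [Hnz Hzz].
unfold d3phi, d2phi.
set (z := dphi m E x) in *. clearbody z.
set (p := x ^ (2 * m - 2)).
assert (P1 : x ^ (2 * m - 1) = x * p).
{ unfold p. replace (2 * m - 1)%nat with (S (2 * m - 2)) by lia. reflexivity. }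
assert (P2 : x ^ (Nat.pred (2 * m - 1)) = p).
{ unfold p. f_equal. lia. }
assert (P3 : x ^ (4 * m - 2) = x * x * (p * p)).
{ unfold p. replace (4 * m - 2)%nat with (S (S ((2 * m - 2) + (2 * m - 2)))) by lia.
  simpl. rewrite pow_add. ring. }
assert (P4 : x ^ (2 * m) = x * x * p).
{ unfold p. replace (2 * m)%nat with (S (S (2 * m - 2))) at 1 by lia. simpl. ring. }
assert (P5 : INR (2 * m - 1) = 2 * INR m - 1).
{ rewrite minus_INR by lia. rewrite mult_INR. simpl. ring. }
rewrite P4 in Hzz. rewrite P1, P2, P3, P5.
unfold one, zero; simpl.
change ((((2 * INR m - 1) * 1 * p)%R, 0)) with (RtoC ((2 * INR m - 1) * 1 * p)).
assert (HN : INR m <> 0) by lra.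
assert (HNC : RtoC (INR m) <> RtoC 0) by (intro H; apply HN; injection H; auto).
rewrite RtoC_div in Hzz by exact HN.
rewrite !RtoC_mult in Hzz.
rewrite !RtoC_mult, !RtoC_minus, RtoC_inv by exact HN.
rewrite !RtoC_mult.
assert (HE' : E = Cminus (Cmult z z) (RtoC x * RtoC x * RtoC p / RtoC (INR m))%C).
{ rewrite Hzz. ring. }
rewrite HE'.
field. split; auto.
Qed.


Lemma fpot_eq (h : R) (m : nat) (E : C) x : (1 <= m)%nat -> 0 < Im E ->
  fpot h m E x =
       Cmult (RtoC (- h ^ 2 * x ^ (2 * m - 2)))
         (Cmult (Cminus (RtoC ((1 / 4 + 1 / (2 * INR m)) * x ^ (2 * m)))
                        (Cmult (RtoC (INR m - 1 / 2)) E))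
                (Cinv (Cmult (Cmult (dphi m E x) (dphi m E x))
                             (Cmult (dphi m E x) (dphi m E x))))).
Proof.
intros Hm HE.
destruct (deriv_all m E x Hm HE) as (_ & _ & Hnz & Hzz).
assert (HmR : 1 <= INR m) by (apply (le_INR 1); exact Hm).
unfold fpot, d3phi, d2phi.
set (z := dphi m E x) in *. clearbody z.
assert (P1 : x ^ (2 * m - 1) = x * x ^ (2 * m - 2)).
{ replace (2 * m - 1)%nat with (S (2 * m - 2)) by lia. reflexivity. }
assert (P3 : x ^ (4 * m - 2) = x * x * (x ^ (2 * m - 2) * x ^ (2 * m - 2))).
{ replace (4 * m - 2)%nat with (S (S ((2 * m - 2) + (2 * m - 2)))) by lia.
  simpl. rewrite pow_add. ring. }
assert (P4 : x ^ (2 * m) = x * x * x ^ (2 * m - 2)).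
{ replace (2 * m)%nat with (S (S (2 * m - 2))) at 1 by lia. simpl. ring. }
assert (P5 : INR (2 * m - 1) = 2 * INR m - 1).
{ rewrite minus_INR by lia. rewrite mult_INR. simpl. ring. }
rewrite P4 in Hzz. rewrite P1, P3, P4, P5.
remember (x ^ (2 * m - 2)) as p.
assert (HN : INR m <> 0) by lra.
assert (HNC : RtoC (INR m) <> RtoC 0) by (intro H; apply HN; injection H; auto).
set (N := INR m) in *.
rewrite (RtoC_div _ _ HN), !RtoC_mult in Hzz.
assert (HE' : E = Cminus (Cmult z z) (RtoC x * RtoC x * RtoC p / RtoC N)%C).
{ rewrite Hzz. ring. }
rewrite HE'. clear HE' Hzz.
rewrite (RtoC_opp (h^2)), (RtoC_pow h 2), (RtoC_mult (- h^2) p), (RtoC_opp (h^2)), (RtoC_pow h 2).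
rewrite (RtoC_div 3 4) by lra. rewrite (RtoC_div 1 2) by lra.
rewrite (RtoC_mult x p).
rewrite (RtoC_mult (1 - / N)), (RtoC_minus 1 (/ N)), (RtoC_inv N HN).
rewrite (RtoC_mult (2 * N - 1) p), (RtoC_minus (2 * N) 1), (RtoC_mult 2 N).
rewrite (RtoC_mult (1 / 4 + 1 / (2 * N))), (RtoC_plus (1/4)).
rewrite (RtoC_mult (x*x) (p*p)), (RtoC_mult (x*x) p), !(RtoC_mult x x), (RtoC_mult p p).
rewrite (RtoC_div 1 4) by lra. rewrite (RtoC_div 1 (2 * N)) by (apply Rmult_integral_contrapositive; split; lra).
rewrite (RtoC_minus N (1/2)), (RtoC_div 1 2) by lra.
rewrite (RtoC_mult 2 N). match goal with |- ?A = ?B => change (@eq C A B) end. field. split; auto.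
Qed.


Lemma dphi_cont (m : nat) (E : C) t : (1 <= m)%nat -> 0 < Im E ->
  @continuous R_UniformSpace C_R_NormedModule (dphi m E) t.
Proof.
intros Hm HE. apply (@ex_derive_continuous R_AbsRing C_R_NormedModule).
exists (d2phi m E t). exact (proj1 (deriv_all m E t Hm HE)).
Qed.

Lemma phi_derive (m : nat) (E : C) x : (1 <= m)%nat -> 0 < Im E ->
  @is_derive R_AbsRing C_R_NormedModule (phi m E) x (dphi m E x).
Proof.
intros Hm HE. unfold phi.
apply (@is_derive_RInt C_R_NormedModule (dphi m E) _ 0).
- apply filter_forall. intro b0. apply (@RInt_correct C_R_CompleteNormedModule).
  apply (@ex_RInt_continuous C_R_CompleteNormedModule). intros z _. apply dphi_cont; auto.
- apply dphi_cont; auto.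
Qed.


Lemma comparison (F G f g : R -> R) x :
  (forall t, is_derive F t (f t)) -> (forall t, is_derive G t (g t)) ->
  (forall t, Rabs (f t) <= g t) -> F 0 = 0 -> G 0 = 0 ->
  Rabs (F x) <= Rabs (G x).
Proof.
intros HF HG Hfg F0 G0.
assert (HD : forall sg, exists c, G x + sg * F x = (g c + sg * f c) * x).
{ intro sg.
  assert (HD' : forall t, is_derive (fun t => G t + sg * F t) t (g t + sg * f t)).
  { intro t. apply (is_derive_plus G (fun t => sg * F t) t (g t) (sg * f t)); [apply HG|].
    apply is_derive_scal. apply HF. }
  destruct (MVT_gen (fun t => G t + sg * F t) 0 x (fun t => g t + sg * f t)) as [c [_ Hc]].
  - intros t _. apply HD'.
  - intros t _. apply (proj2 (continuity_pt_filterlim (fun t => G t + sg * F t) t)).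
    apply (@ex_derive_continuous R_AbsRing R_NormedModule (fun t => G t + sg * F t) t).
    exists (g t + sg * f t). apply HD'.
  - exists c. rewrite F0, G0 in Hc. lra. }
destruct (HD 1) as [c1 H1]. destruct (HD (-1)) as [c2 H2].
pose proof (Hfg c1) as A1. pose proof (Hfg c2) as A2.
apply Rabs_le_between in A1. apply Rabs_le_between in A2.
destruct (Rle_or_lt 0 x) as [Hx|Hx].
- assert (0 <= G x + F x) by nra. assert (0 <= G x - F x) by nra.
  rewrite (Rabs_pos_eq (G x)) by lra. apply Rabs_le. lra.
- assert (G x + F x <= 0) by nra. assert (G x - F x <= 0) by nra.
  rewrite (Rabs_left1 (G x)) by lra. apply Rabs_le. lra.
Qed.

Lemma v_bounds a b : 0 < a -> 0 < b ->
  0 <= snd (sqrt_pim (a, b)) /\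
  snd (sqrt_pim (a, b)) * snd (sqrt_pim (a, b)) <= b / 2 /\
  snd (sqrt_pim (a, b)) * snd (sqrt_pim (a, b)) <= b * b / (4 * a).
Proof.
intros Ha Hb.
destruct (pim_facts a b Hb) as (Hr & Hr2 & Har & Har' & Hu & Hv & Hu2 & Hv2 & Huv).
set (r := Cmod (a, b)) in *.
set (v := snd (sqrt_pim (a, b))) in *.
assert (Hrab : r <= a + b) by nra.
split; [lra|]. split; [lra|].
rewrite Hv2.
assert (E1 : b * b / (4 * a) = (r - a) / 2 + (b * b - 2 * a * (r - a)) / (4 * a)) by (field; lra).
rewrite E1.
assert (0 <= (b * b - 2 * a * (r - a)) / (4 * a)).
{ apply Rdiv_le_0_compat; nra. }
lra.
Qed.

Lemma part2_core (alpha mu : R) (m : nat) H X :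
  0 < alpha -> 0 < mu -> (1 <= m)%nat -> 0 < H -> 0 <= X ->
  let K := 1 + alpha + mu + / alpha + INR m in
  / K * sqrt (H + X) <= Cmod (sqrt_pim (alpha * H + / INR m * X, mu * H)) /\
  Cmod (sqrt_pim (alpha * H + / INR m * X, mu * H)) <= K * sqrt (H + X).
Proof.
intros Ha Hmu Hm HH HX K.
assert (HmR : 1 <= INR m) by (apply (le_INR 1); exact Hm).
assert (Hb : 0 < mu * H) by nra.
destruct (pim_facts (alpha * H + / INR m * X) (mu * H) Hb)
  as (Hr & Hr2 & Har & Har' & Hu & Hv & Hu2 & Hv2 & Huv).
set (a := alpha * H + / INR m * X) in *.
set (r := Cmod (a, mu * H)) in *.
assert (Hmod : Cmod (sqrt_pim (a, mu * H)) = sqrt r).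
{ revert Hu2 Hv2. destruct (sqrt_pim (a, mu * H)) as [u v]. simpl. intros.
  unfold Cmod. simpl. f_equal. lra. }
rewrite Hmod.
assert (HK1 : 1 <= K).
{ unfold K. assert (0 < / alpha) by (apply Rinv_0_lt_compat; lra). lra. }
assert (HKa : 1 <= K * alpha).
{ unfold K. rewrite Rmult_plus_distr_r. rewrite (Rmult_plus_distr_r _ (/alpha)).
  rewrite Rinv_l by lra. assert (0 < / alpha) by (apply Rinv_0_lt_compat; lra).
  assert (0 <= INR m * alpha) by nra. nra. }
assert (HKm : INR m <= K).
{ unfold K. assert (0 < / alpha) by (apply Rinv_0_lt_compat; lra). lra. }
assert (Hinvm : 0 < / INR m) by (apply Rinv_0_lt_compat; lra).
assert (HKm' : 1 <= K * / INR m * INR m) by (rewrite Rmult_assoc, Rinv_l by lra; lra).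
assert (Hmk : 1 <= K * / INR m).
{ assert (/ INR m * INR m = 1) by (field; lra).
  apply (Rmult_le_reg_r (INR m)); [lra|]. nra. }
assert (Ha0 : 0 <= a) by (unfold a; nra).
assert (Hlow : H + X <= K * a).
{ unfold a. nra. }
assert (Hup : r <= K * (H + X)).
{ assert (r <= a + mu * H) by nra. unfold a in *.
  assert (/ INR m <= 1).
  { rewrite <- Rinv_1. apply Rinv_le_contravar; lra. }
  assert ((alpha + mu) * H <= K * H).
  { apply Rmult_le_compat_r; [lra|]. unfold K.
    assert (0 < / alpha) by (apply Rinv_0_lt_compat; lra). lra. }
  assert (/ INR m * X <= K * X) by (apply Rmult_le_compat_r; lra).
  nra. }
split.
- assert (HKp : 0 < K) by lra.
  replace (/ K * sqrt (H + X)) with (sqrt ((H + X) / (K * K))).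
  + apply sqrt_le_1_alt. apply (Rmult_le_reg_r (K * K)); [nra|].
    unfold Rdiv. rewrite Rmult_assoc, Rinv_l by nra. rewrite Rmult_1_r.
    nra.
  + rewrite sqrt_div_alt by nra. rewrite sqrt_square by lra. field. lra.
- replace (K * sqrt (H + X)) with (sqrt (K * K * (H + X))).
  + apply sqrt_le_1_alt. nra.
  + rewrite sqrt_mult_alt by nra. rewrite sqrt_square by lra. reflexivity.
Qed.


Lemma sq_le_le v R0 : 0 <= v -> 0 <= R0 -> v * v <= R0 * R0 -> v <= R0.
Proof. intros. nra. Qed.

Lemma imbound_m2 (alpha mu : R) (m : nat) s t :
  0 < alpha -> 0 < mu -> (2 <= m)%nat -> 0 < s ->
  snd (sqrt_pim (alpha * s ^ (2 * m) + / INR m * t ^ (2 * m), mu * s ^ (2 * m)))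
  <= (1 + 2 * mu + mu * INR m) * s ^ (m + 1) * s / (s * s + t * t).
Proof.
intros Ha Hmu Hm Hs.
set (K := 1 + 2 * mu + mu * INR m).
assert (HmR : 2 <= INR m) by (apply (le_INR 2); exact Hm).
set (H := s ^ (2 * m)).
set (X := t ^ (2 * m)).
assert (HH : 0 < H) by (apply pow_lt; lra).
assert (HX : 0 <= X) by (unfold X; rewrite pow_mult; apply pow_le; nra).
assert (Hinv : 0 < / INR m) by (apply Rinv_0_lt_compat; lra).
assert (Ha0 : 0 < alpha * H + / INR m * X) by nra.
destruct (v_bounds (alpha * H + / INR m * X) (mu * H) Ha0 ltac:(nra)) as (Hv0 & Hv1 & Hv2).
set (v := snd (sqrt_pim _)) in *.
assert (Hhs : (s ^ (m + 1) * s) * (s ^ (m + 1) * s) = s * s * (s * s) * H).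
{ unfold H. replace (2 * m)%nat with (m + m)%nat by lia. rewrite (pow_add s m m).
  replace (m + 1)%nat with (S m) by lia. simpl. ring. }
assert (Hhs0 : 0 < s ^ (m + 1) * s) by (apply Rmult_lt_0_compat; [apply pow_lt|]; lra).
assert (Hd : 0 < s * s + t * t) by nra.
apply sq_le_le; auto.
{ unfold K. apply Rdiv_le_0_compat; [|lra]. assert (0 <= mu * INR m) by nra. nra. }
assert (ER : K * s ^ (m + 1) * s / (s * s + t * t) * (K * s ^ (m + 1) * s / (s * s + t * t))
   = K * K * (s * s * (s * s) * H) / ((s * s + t * t) * (s * s + t * t))).
{ rewrite <- Hhs. field. lra. }
rewrite ER.
assert (HK2 : 2 * mu <= K * K).
{ unfold K. assert (0 <= mu * INR m) by nra. nra. }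
assert (HK3 : INR m * (mu * mu) <= K * K).
{ unfold K. assert (INR m <= INR m * INR m) by nra. assert (0 <= mu * INR m) by nra. nra. }
destruct (Rle_or_lt (t * t) (s * s)) as [Hts|Hts].
-
  assert (mu * H / 2 <= K * K * (s * s * (s * s) * H) / ((s * s + t * t) * (s * s + t * t))).
  { apply (Rmult_le_reg_r ((s * s + t * t) * (s * s + t * t))); [nra|].
    unfold Rdiv. rewrite (Rmult_assoc (K * K * (s * s * (s * s) * H))), Rinv_l by nra.
    rewrite Rmult_1_r.
    assert ((s * s + t * t) * (s * s + t * t) <= 4 * (s * s * (s * s))) by nra.
    assert (0 <= s * s * (s * s)) by nra.
    assert (mu * H / 2 * ((s * s + t * t) * (s * s + t * t)) <= mu * H / 2 * (4 * (s * s * (s * s)))).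
    { apply Rmult_le_compat_l; nra. }
    assert (2 * mu * (s * s * (s * s) * H) <= K * K * (s * s * (s * s) * H)).
    { apply Rmult_le_compat_r; nra. }
    nra. }
  lra.
-
  assert (Ht0 : 0 < t * t) by nra.
  assert (HXs : H * (t * t * (t * t)) <= s * s * (s * s) * X).
  { unfold H, X. replace (2 * m)%nat with (4 + 2 * (m - 2))%nat by (clear -Hm; lia).
    rewrite !pow_add, !pow_mult. simpl.
    assert ((s * (s * 1)) ^ (m - 2) <= (t * (t * 1)) ^ (m - 2)).
    { apply pow_incr. split; nra. }
    assert (0 <= (s * (s * 1)) ^ (m - 2)) by (apply pow_le; nra).
    set (Q := (s * (s * 1)) ^ (m - 2)) in *. set (P := (t * (t * 1)) ^ (m - 2)) in *.
    replace (s * (s * (s * (s * 1))) * Q * (t * t * (t * t))) with ((s * s * (s * s) * (t * t * (t * t))) * Q) by ring.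
    replace (s * s * (s * s) * (t * (t * (t * (t * 1))) * P)) with ((s * s * (s * s) * (t * t * (t * t))) * P) by ring.
    apply Rmult_le_compat_l; [|lra]. nra. }
  assert (HX0 : 0 < X).
  { assert (0 < H * (t * t * (t * t))) by (apply Rmult_lt_0_compat; nra).
    assert (Hs4 : 0 < s * s * (s * s)) by nra.
    destruct (Rle_or_lt X 0) as [HX1|HX1]; [|exact HX1].
    assert (s * s * (s * s) * X <= 0) by (apply Rmult_le_0_l; lra). lra. }
  assert (Ha1 : / INR m * X <= alpha * H + / INR m * X) by nra.
  assert (Hv3 : v * v <= INR m * (mu * mu) * (H * H) / (4 * X)).
  { eapply Rle_trans; [exact Hv2|].
    replace (INR m * (mu * mu) * (H * H) / (4 * X)) with (mu * H * (mu * H) / (4 * (/ INR m * X)))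
      by (field; lra).
    apply Rmult_le_compat_l; [nra|]. apply Rinv_le_contravar; nra. }
  eapply Rle_trans; [exact Hv3|].
  assert (Hpos : 0 < 4 * X * ((s * s + t * t) * (s * s + t * t))).
  { apply Rmult_lt_0_compat; [lra|]. apply Rmult_lt_0_compat; lra. }
  apply (Rmult_le_reg_r (4 * X * ((s * s + t * t) * (s * s + t * t)))); [exact Hpos|].
  replace (INR m * (mu * mu) * (H * H) / (4 * X) * (4 * X * ((s * s + t * t) * (s * s + t * t))))
    with (INR m * (mu * mu) * (H * H) * ((s * s + t * t) * (s * s + t * t))) by (field; lra).
  replace (K * K * (s * s * (s * s) * H) / ((s * s + t * t) * (s * s + t * t)) *
     (4 * X * ((s * s + t * t) * (s * s + t * t))))
    with (4 * (K * K) * (s * s * (s * s) * X) * H) by (field; lra).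
  assert ((s * s + t * t) * (s * s + t * t) <= 4 * (t * t * (t * t))) by nra.
  assert (A1 : INR m * (mu * mu) * (H * H) * ((s * s + t * t) * (s * s + t * t))
     <= INR m * (mu * mu) * (H * H) * (4 * (t * t * (t * t)))).
  { apply Rmult_le_compat_l; [|lra]. assert (0 <= mu * mu) by nra. assert (0 <= H * H) by nra.
    assert (0 <= INR m * (mu * mu)) by nra. nra. }
  assert (A2 : INR m * (mu * mu) * (H * H) * (4 * (t * t * (t * t)))
     <= 4 * (INR m * (mu * mu)) * (s * s * (s * s) * X) * H).
  { assert (0 <= INR m * (mu * mu)) by nra.
    replace (INR m * (mu * mu) * (H * H) * (4 * (t * t * (t * t))))
      with (4 * (INR m * (mu * mu)) * (H * (t * t * (t * t))) * H) by ring.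
    apply Rmult_le_compat_r; [lra|]. apply Rmult_le_compat_l; lra. }
  assert (A3 : 4 * (INR m * (mu * mu)) * (s * s * (s * s) * X) * H
     <= 4 * (K * K) * (s * s * (s * s) * X) * H).
  { apply Rmult_le_compat_r; [lra|]. apply Rmult_le_compat_r; [nra|]. lra. }
  lra.
Qed.

Lemma imbound_m1 (alpha mu : R) s t :
  0 < alpha -> 0 < mu -> 0 < s ->
  snd (sqrt_pim (alpha * s ^ (2 * 1) + / INR 1 * t ^ (2 * 1), mu * s ^ (2 * 1)))
  <= ((1 + mu) * (1 + / alpha)) * s ^ (1 + 1) / sqrt (t * t + s * s).
Proof.
intros Ha Hmu Hs.
set (K := (1 + mu) * (1 + / alpha)).
assert (Hia : 0 < / alpha) by (apply Rinv_0_lt_compat; lra).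
assert (E1 : alpha * s ^ (2 * 1) + / INR 1 * t ^ (2 * 1) = alpha * (s * s) + t * t).
{ simpl. field. }
assert (E2 : mu * s ^ (2 * 1) = mu * (s * s)) by (simpl; ring).
rewrite E1, E2.
assert (Ha0 : 0 < alpha * (s * s) + t * t) by (assert (0 < alpha * (s * s)) by (apply Rmult_lt_0_compat; nra); nra).
destruct (v_bounds _ (mu * (s * s)) Ha0 ltac:(apply Rmult_lt_0_compat; nra)) as (Hv0 & Hv1 & Hv2).
set (v := snd (sqrt_pim _)) in *.
set (S := sqrt (t * t + s * s)).
assert (HS : 0 < S) by (apply sqrt_lt_R0; nra).
assert (HS2 : S * S = t * t + s * s) by (apply sqrt_sqrt; nra).
assert (Hss : s ^ (1 + 1) = s * s) by (simpl; ring).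
rewrite Hss.
apply sq_le_le; auto.
{ apply Rdiv_le_0_compat; [|lra]. unfold K. assert (0 < (1+mu)*(1+/alpha)) by nra. nra. }
replace (K * (s * s) / S * (K * (s * s) / S)) with (K * K * (s * s * (s * s)) / (t * t + s * s))
  by (rewrite <- HS2; field; lra).
eapply Rle_trans; [exact Hv2|].
assert (HKa : 1 <= (1 + / alpha) * (1 + / alpha) * alpha).
{ replace ((1 + / alpha) * (1 + / alpha) * alpha) with (alpha + 2 + / alpha) by (field; lra). lra. }
assert (HK1 : mu * mu <= K * K * alpha).
{ unfold K. replace ((1 + mu) * (1 + / alpha) * ((1 + mu) * (1 + / alpha)) * alpha)
    with ((1 + mu) * (1 + mu) * ((1 + / alpha) * (1 + / alpha) * alpha)) by ring.
  assert (mu * mu <= (1 + mu) * (1 + mu)) by nra.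
  assert (0 <= (1 + mu) * (1 + mu)) by nra. nra. }
assert (HK2 : mu * mu <= K * K).
{ unfold K. assert (1 <= (1 + / alpha)) by lra. assert (1 + mu <= (1 + mu) * (1 + / alpha)) by nra.
  nra. }
apply (Rmult_le_reg_r (4 * (alpha * (s * s) + t * t) * (t * t + s * s))).
{ apply Rmult_lt_0_compat; nra. }
replace (mu * (s * s) * (mu * (s * s)) / (4 * (alpha * (s * s) + t * t)) *
    (4 * (alpha * (s * s) + t * t) * (t * t + s * s)))
  with ((mu * mu) * (s * s * (s * s)) * (t * t + s * s)) by (field; lra).
replace (K * K * (s * s * (s * s)) / (t * t + s * s) *
    (4 * (alpha * (s * s) + t * t) * (t * t + s * s)))
  with (4 * (K * K) * (s * s * (s * s)) * (alpha * (s * s) + t * t)) by (field; nra).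
assert (Hs4 : 0 <= s * s * (s * s)) by nra.
assert (mu * mu * (t * t + s * s) <= 4 * (K * K) * (alpha * (s * s) + t * t)) by nra.
replace (mu * mu * (s * s * (s * s)) * (t * t + s * s)) with (s * s * (s * s) * (mu * mu * (t * t + s * s))) by ring.
replace (4 * (K * K) * (s * s * (s * s)) * (alpha * (s * s) + t * t)) with (s * s * (s * s) * (4 * (K * K) * (alpha * (s * s) + t * t))) by ring.
apply Rmult_le_compat_l; lra.
Qed.


Lemma G2_derive c s t : 0 < s ->
  is_derive (fun t => c * atan (t / s)) t (c * s / (s * s + t * t)).
Proof.
intros Hs. auto_derive.
- auto.
- field. split; [nra | lra].
Qed.

Lemma Sfacts s t : 0 < s -> 0 < sqrt (t * t + s * s) /\
  sqrt (t * t + s * s) * sqrt (t * t + s * s) = t * t + s * s /\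
  0 < t + sqrt (t * t + s * s) /\ 0 < - t + sqrt (t * t + s * s).
Proof.
intros Hs.
assert (HS : 0 < sqrt (t * t + s * s)) by (apply sqrt_lt_R0; nra).
assert (HS2 : sqrt (t * t + s * s) * sqrt (t * t + s * s) = t * t + s * s) by (apply sqrt_sqrt; nra).
set (S := sqrt (t * t + s * s)) in *.
repeat split; auto; nra.
Qed.

Lemma G1_derive c s t : 0 < s ->
  is_derive (fun t => c * (ln (t + sqrt (t * t + s * s)) - ln s)) t (c / sqrt (t * t + s * s)).
Proof.
intros Hs. destruct (Sfacts s t Hs) as (HS & HS2 & HP & HM).
auto_derive.
- repeat split; auto; nra.
- set (S := sqrt (t * t + s * s)) in *. field. lra.
Qed.

Lemma G2_bound c s x : 0 < s -> 0 <= c -> Rabs (c * atan (x / s)) <= 2 * c.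
Proof.
intros Hs Hc. rewrite Rabs_mult, Rabs_pos_eq by lra.
destruct (atan_bound (x / s)). pose proof PI_4.
assert (Rabs (atan (x / s)) <= 2) by (apply Rabs_le; lra).
nra.
Qed.

Lemma G1_odd c s y : 0 < s ->
  c * (ln (- y + sqrt ((- y) * (- y) + s * s)) - ln s) = - (c * (ln (y + sqrt (y * y + s * s)) - ln s)).
Proof.
intros Hs. destruct (Sfacts s y Hs) as (HS & HS2 & HP & HM).
replace ((- y) * (- y)) with (y * y) by ring.
set (S := sqrt (y * y + s * s)) in *.
assert (ln (- y + S) + ln (y + S) = 2 * ln s).
{ rewrite <- ln_mult by lra. replace ((- y + S) * (y + S)) with (s * s) by nra.
  rewrite ln_mult by lra. ring. }
nra.
Qed.

Lemma ln3_lt_2 : ln 3 < 2.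
Proof.
rewrite <- (ln_exp 2). apply ln_increasing; [lra|].
pose proof (exp_ineq1 2 ltac:(lra)). lra.
Qed.

Lemma G1_bound_pos c s y : 0 < s -> 0 <= c -> 0 <= y ->
  0 <= c * (ln (y + sqrt (y * y + s * s)) - ln s) <=
  2 * c * (1 + ln (Rmax 1 (y / s))).
Proof.
intros Hs Hc Hy. destruct (Sfacts s y Hs) as (HS & HS2 & HP & HM).
set (S := sqrt (y * y + s * s)) in *.
assert (HSs : s <= S).
{ destruct (Rle_or_lt s S) as [h|h]; [exact h|].
  assert (S * S < s * s) by (apply Rmult_le_0_lt_compat; lra). nra. }
assert (HSy : S <= y + s).
{ destruct (Rle_or_lt S (y + s)) as [h|h]; [exact h|].
  assert ((y + s) * (y + s) < S * S) by (apply Rmult_le_0_lt_compat; lra). nra. }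
set (M := Rmax 1 (y / s)).
assert (HM1 : 1 <= M) by apply Rmax_l.
assert (HMy : y / s <= M) by apply Rmax_r.
assert (HyM : y <= M * s).
{ apply (Rmult_le_compat_r s) in HMy; [|lra]. unfold Rdiv in HMy.
  rewrite Rmult_assoc, Rinv_l, Rmult_1_r in HMy by lra. exact HMy. }
assert (Hln0 : 0 <= ln M) by (rewrite <- ln_1; apply ln_le; lra).
assert (E : ln (y + S) - ln s = ln ((y + S) / s)).
{ unfold Rdiv. rewrite ln_mult, ln_Rinv by (try apply Rinv_0_lt_compat; lra). ring. }
rewrite E.
split.
- apply Rmult_le_pos; [lra|]. rewrite <- ln_1. apply ln_le; [lra|].
  apply (Rmult_le_reg_r s); [lra|]. unfold Rdiv. rewrite Rmult_assoc, Rinv_l by lra. lra.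
- assert (Hq : (y + S) / s <= 3 * M).
  { apply (Rmult_le_reg_r s); [lra|]. unfold Rdiv. rewrite Rmult_assoc, Rinv_l by lra. nra. }
  assert (ln ((y + S) / s) <= ln (3 * M)).
  { apply ln_le; [|exact Hq]. apply Rdiv_lt_0_compat; lra. }
  rewrite ln_mult in H by lra. pose proof ln3_lt_2.
  assert (ln ((y + S) / s) <= 2 * (1 + ln M)) by lra.
  apply Rmult_le_compat_l with (r := c) in H1; [|lra]. lra.
Qed.

Lemma G1_bound c s x : 0 < s -> 0 <= c ->
  Rabs (c * (ln (x + sqrt (x * x + s * s)) - ln s)) <=
  2 * c * (1 + ln (Rmax 1 (Rabs x / s))).
Proof.
intros Hs Hc.
destruct (Rle_or_lt 0 x) as [Hx|Hx].
- rewrite Rabs_pos_eq with (x := x) by lra.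
  destruct (G1_bound_pos c s x Hs Hc Hx). rewrite Rabs_pos_eq by lra. lra.
- rewrite Rabs_left with (r := x) by lra.
  destruct (G1_bound_pos c s (- x) Hs Hc ltac:(lra)).
  pose proof (G1_odd c s (- x) Hs) as Hodd.
  replace (- - x) with x in Hodd by ring.
  rewrite Hodd. rewrite Rabs_Ropp. rewrite Rabs_pos_eq by lra. lra.
Qed.


Lemma h_facts (m : nat) h : 0 < h ->
  0 < Rpower h (/ (INR m + 1)) /\
  hpow m h = Rpower h (/ (INR m + 1)) ^ (2 * m) /\
  h = Rpower h (/ (INR m + 1)) ^ (m + 1).
Proof.
intros Hh.
assert (Hm0 : 0 <= INR m) by apply pos_INR.
split; [unfold Rpower; apply exp_pos|].
split.
- unfold hpow. rewrite <- Rpower_pow by (unfold Rpower; apply exp_pos).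
  rewrite Rpower_mult. f_equal. rewrite mult_INR. simpl. field. lra.
- rewrite <- Rpower_pow by (unfold Rpower; apply exp_pos).
  rewrite Rpower_mult. rewrite plus_INR. simpl.
  replace (/ (INR m + 1) * (INR m + 1)) with 1 by (field; lra).
  rewrite Rpower_1; auto.
Qed.

Lemma Eh_eq alpha mu m h : Eh alpha mu m h = (alpha * hpow m h, mu * hpow m h).
Proof. unfold Eh, Cmult, RtoC; simpl. f_equal; ring. Qed.

Lemma Im_phi0 m E : Im (phi m E 0) = 0.
Proof. unfold phi. rewrite RInt_point. reflexivity. Qed.

Lemma part1 (m : nat) (alpha mu : R) :
  (1 <= m)%nat -> 0 < alpha -> 0 < mu ->
  exists C : R, 0 < C /\
     forall h x : R, 0 < h <= 1 ->
       Rabs (Im (phi m (Eh alpha mu m h) x)) <=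
       C * (if Nat.eqb m 1 then h * (1 + ln (Rmax 1 (Rabs x / sqrt h))) else h).
Proof.
intros Hm Ha Hmu.
assert (Hia : 0 < / alpha) by (apply Rinv_0_lt_compat; lra).
destruct (Nat.eqb_spec m 1) as [Hm1|Hm1].
- subst m. exists (2 * ((1 + mu) * (1 + / alpha))). split; [nra|].
  intros h x Hh.
  destruct (h_facts 1 h ltac:(lra)) as (Hs & HH & Hhs).
  set (s := Rpower h (/ (INR 1 + 1))) in *.
  assert (Hsq : s = sqrt h).
  { unfold s. simpl. replace (/ (1 + 1)) with (/ 2) by (field). apply Rpower_sqrt. lra. }
  set (K := (1 + mu) * (1 + / alpha)).
  assert (HK : 0 < K) by (unfold K; nra).
  set (E := Eh alpha mu 1 h).
  assert (HIE : 0 < Im E).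
  { unfold E. rewrite Eh_eq. simpl. rewrite HH. apply Rmult_lt_0_compat; [lra|]. apply pow_lt; lra. }
  assert (Hcmp := comparison (fun t => Im (phi 1 E t))
     (fun t => (K * s ^ (1 + 1)) * (ln (t + sqrt (t * t + s * s)) - ln s))
     (fun t => Im (dphi 1 E t))
     (fun t => (K * s ^ (1 + 1)) / sqrt (t * t + s * s)) x).
  eapply Rle_trans; [apply Hcmp|].
  + intro t. apply is_derive_Im. apply phi_derive; auto.
  + intro t. apply G1_derive. exact Hs.
  + intro t. unfold E. rewrite dphi_eq, Eh_eq. simpl fst. simpl snd. rewrite HH.
    destruct (v_bounds (alpha * s ^ (2 * 1) + / INR 1 * t ^ (2 * 1)) (mu * s ^ (2 * 1))) as [Hv0 _].
    { simpl. rewrite Rinv_1. assert (0 < alpha * (s * (s * 1))) by (apply Rmult_lt_0_compat; nra). nra. }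
    { apply Rmult_lt_0_compat; [lra|]. apply pow_lt; lra. }
    rewrite Rabs_pos_eq by exact Hv0.
    apply imbound_m1; auto.
  + apply Im_phi0.
  + simpl. replace (0 * 0 + s * s) with (s * s) by ring. rewrite Rplus_0_l.
    rewrite sqrt_square by lra. ring.
  + eapply Rle_trans; [apply G1_bound; [exact Hs | apply Rmult_le_pos; [lra | apply pow_le; lra]]|].
    rewrite <- Hhs. simpl Nat.eqb. cbv iota. rewrite <- Hsq. apply Req_le. ring.
- exists (2 * (1 + 2 * mu + mu * INR m)).
  assert (HmR : 1 <= INR m) by (apply (le_INR 1); exact Hm).
  split; [nra|].
  intros h x Hh.
  assert (Hm2 : (2 <= m)%nat) by lia.
  destruct (h_facts m h ltac:(lra)) as (Hs & HH & Hhs).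
  set (s := Rpower h (/ (INR m + 1))) in *.
  set (K := 1 + 2 * mu + mu * INR m).
  assert (HK : 0 < K) by (unfold K; nra).
  set (E := Eh alpha mu m h).
  assert (HIE : 0 < Im E).
  { unfold E. rewrite Eh_eq. simpl. rewrite HH. apply Rmult_lt_0_compat; [lra|]. apply pow_lt; lra. }
  assert (Hcmp := comparison (fun t => Im (phi m E t))
     (fun t => (K * s ^ (m + 1)) * atan (t / s))
     (fun t => Im (dphi m E t))
     (fun t => (K * s ^ (m + 1)) * s / (s * s + t * t)) x).
  eapply Rle_trans; [apply Hcmp|].
  + intro t. apply is_derive_Im. apply phi_derive; auto.
  + intro t. apply G2_derive. exact Hs.
  + intro t. unfold E. rewrite dphi_eq, Eh_eq. simpl fst. simpl snd. rewrite HH.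
    destruct (v_bounds (alpha * s ^ (2 * m) + / INR m * t ^ (2 * m)) (mu * s ^ (2 * m))) as [Hv0 _].
    { assert (0 < alpha * s ^ (2 * m)) by (apply Rmult_lt_0_compat; [lra|]; apply pow_lt; lra).
      assert (0 <= / INR m * t ^ (2 * m)).
      { apply Rmult_le_pos. left; apply Rinv_0_lt_compat; lra. rewrite pow_mult. apply pow_le. nra. }
      lra. }
    { apply Rmult_lt_0_compat; [lra|]. apply pow_lt; lra. }
    rewrite Rabs_pos_eq by exact Hv0.
    apply imbound_m2; auto.
  + apply Im_phi0.
  + unfold Rdiv. rewrite Rmult_0_l, atan_0. ring.
  + eapply Rle_trans; [apply G2_bound; [exact Hs | apply Rmult_le_pos; [lra | apply pow_le; lra]]|].
    rewrite <- Hhs. destruct (Nat.eqb_spec m 1); [contradiction|]. apply Req_le. ring.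
Qed.


Theorem lemma5p1 (m : nat) (alpha mu : R) :
  (1 <= m)%nat -> 0 < alpha -> 0 < mu ->
  (* (i) *)
  (exists C : R, 0 < C /\
     forall h x : R, 0 < h <= 1 ->
       Rabs (Im (phi m (Eh alpha mu m h) x)) <=
       C * (if Nat.eqb m 1 then h * (1 + ln (Rmax 1 (Rabs x / sqrt h))) else h)) /\
  (forall C0 : R, 0 < C0 -> exists C' : R, 0 < C' /\
     forall h x : R, 0 < h <= 1 -> Rabs x <= C0 * Rpower h (/ (INR m + 1)) ->
       Rabs (Im (phi m (Eh alpha mu m h) x)) <= C') /\
  (* (ii) *)
  (exists C : R, 0 < C /\
     forall h x : R, 0 < h <= 1 ->
       / C * sqrt (hpow m h + x ^ (2 * m)) <= Cmod (dphi m (Eh alpha mu m h) x) /\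
       Cmod (dphi m (Eh alpha mu m h) x) <= C * sqrt (hpow m h + x ^ (2 * m))) /\
  (* (iii) *)
  (forall h x : R, 0 < h <= 1 ->
     @is_derive R_AbsRing C_R_NormedModule (phi m (Eh alpha mu m h)) x
        (dphi m (Eh alpha mu m h) x) /\
     @is_derive R_AbsRing C_R_NormedModule (dphi m (Eh alpha mu m h)) x
        (d2phi m (Eh alpha mu m h) x) /\
     @is_derive R_AbsRing C_R_NormedModule (d2phi m (Eh alpha mu m h)) x
        (d3phi m (Eh alpha mu m h) x) /\
     fpot h m (Eh alpha mu m h) x =
       Cmult (RtoC (- h ^ 2 * x ^ (2 * m - 2)))
         (Cmult (Cminus (RtoC ((1 / 4 + 1 / (2 * INR m)) * x ^ (2 * m)))
                        (Cmult (RtoC (INR m - 1 / 2)) (Eh alpha mu m h)))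
                (Cinv (Cmult (Cmult (dphi m (Eh alpha mu m h) x) (dphi m (Eh alpha mu m h) x))
                             (Cmult (dphi m (Eh alpha mu m h) x) (dphi m (Eh alpha mu m h) x)))))).
Proof.
intros Hm Ha Hmu.
assert (HIE : forall h, 0 < h -> 0 < Im (Eh alpha mu m h)).
{ intros h Hh. rewrite Eh_eq. simpl. apply Rmult_lt_0_compat; [lra|].
  unfold hpow, Rpower. apply exp_pos. }
destruct (part1 m alpha mu Hm Ha Hmu) as [C1 [HC1 HP1]].
split; [exists C1; split; auto|].
split.
{ intros C0 HC0.
  exists (C1 * (1 + ln (Rmax 1 C0)) + 1).
  assert (Hl : 0 <= ln (Rmax 1 C0)) by (rewrite <- ln_1; apply ln_le; [lra | apply Rmax_l]).
  split; [nra|].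
  intros h x Hh Hx.
  eapply Rle_trans; [apply HP1; exact Hh|].
  destruct (Nat.eqb_spec m 1) as [Hm1|Hm1].
  - subst m.
    assert (Hsq : Rpower h (/ (INR 1 + 1)) = sqrt h).
    { simpl. replace (/ (1 + 1)) with (/ 2) by field. apply Rpower_sqrt. lra. }
    rewrite Hsq in Hx.
    assert (Hs : 0 < sqrt h) by (apply sqrt_lt_R0; lra).
    assert (Hq : Rabs x / sqrt h <= C0).
    { apply (Rmult_le_reg_r (sqrt h)); [lra|]. unfold Rdiv.
      rewrite Rmult_assoc, Rinv_l, Rmult_1_r by lra. exact Hx. }
    assert (HM : Rmax 1 (Rabs x / sqrt h) <= Rmax 1 C0).
    { apply Rmax_lub; [apply Rmax_l|]. eapply Rle_trans; [exact Hq | apply Rmax_r]. }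
    assert (Hl2 : ln (Rmax 1 (Rabs x / sqrt h)) <= ln (Rmax 1 C0)).
    { apply ln_le; [| exact HM]. apply Rlt_le_trans with 1; [lra | apply Rmax_l]. }
    assert (Hl3 : 0 <= ln (Rmax 1 (Rabs x / sqrt h))) by (rewrite <- ln_1; apply ln_le; [lra | apply Rmax_l]).
    assert (h * (1 + ln (Rmax 1 (Rabs x / sqrt h))) <= 1 + ln (Rmax 1 C0)) by nra.
    nra.
  - nra. }
split.
{ exists (1 + alpha + mu + / alpha + INR m).
  assert (HmR : 1 <= INR m) by (apply (le_INR 1); exact Hm).
  assert (Hia : 0 < / alpha) by (apply Rinv_0_lt_compat; lra).
  split; [lra|].
  intros h x Hh.
  rewrite dphi_eq, Eh_eq. simpl fst. simpl snd.
  apply part2_core; auto.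
  - unfold hpow, Rpower. apply exp_pos.
  - rewrite pow_mult. apply pow_le. nra. }
intros h x Hh.
pose proof (HIE h ltac:(lra)) as HE.
destruct (deriv_all m (Eh alpha mu m h) x Hm HE) as (D1 & D2 & _ & _).
split; [apply phi_derive; auto|].
split; [exact D1|]. split; [exact D2|].
apply fpot_eq; auto.
Qed.
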